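(* Let $X$ be a simplicial set and $S\subseteq X^\sharp$ a set of non-degenerate simplices. Let $Y$ be the pushout in simplicial sets of $\bigsqcup_{s\in S}\Delta[m_s]\xleftarrow{\sqcup_s\rho_s}\bigsqcup_{s\in S}\Delta[n_s]\xrightarrow{(\bar s)_s}X$, with canonical map $q:X\to Y$. Then $q$ is degreewise surjective and there is a (unique) map $p:Y\to DX$ with $p\circ q=\eta_X$; $p$ is degreewise surjective. If $Y$ is non-singular, then $p$ is an isomorphism.
   Context: $X^\sharp$ is the set of non-degenerate simplices, $n_x$ the degree of $x$, $\bar x:\Delta[n_x]\to X$ its representing map, $\varepsilon_i:[0]\to[n]$ the operator $0\mapsto i$. A simplicial set is non-singular if every non-degenerate simplex has degreewise injective representing map. The desingularization $DX$ is the image of $X\to\prod_f Y$, $x\mapsto(f(x))_f$, over all quotient maps $f:X\to Y$ (maps $X\to X/R$ for operator-compatible families of equivalence relations) with $Y$ non-singular; $\eta_X:X\to DX$ is the corestriction. Enforcer: for $x\in X^\sharp$ of degree $n$, let $i\sim j$ iff $x\varepsilon_i=x\varepsilon_j$, $i\approx k$ iff some $j$ has $i\le k\le j$ and $i\sim j$, and $\simeq$ the equivalence relation generated by $\approx$; its classes are intervals, and $\rho_x:[n]\to[m_x]$ is the order-preserving surjection onto the ordered quotient $\{0,\dots,n\}/\simeq\cong[m_x]$. *)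

(* Defs.v *)
From Stdlib Require Import Relations FunctionalExtensionality PropExtensionality ProofIrrelevance.
From mathcomp Require Import all_boot.
Set Implicit Arguments. Unset Strict Implicit. Unset Printing Implicit Defensive.

Definition monob m n (f : {ffun 'I_m.+1 -> 'I_n.+1}) : bool :=
  [forall i : 'I_m.+1, forall j : 'I_m.+1, (i <= j) ==> (f i <= f j)].

Definition Op m n := {f : {ffun 'I_m.+1 -> 'I_n.+1} | monob f}.
Definition opfun m n (f : Op m n) : 'I_m.+1 -> 'I_n.+1 := fun i => sval f i.

Lemma monob_id n : monob [ffun i : 'I_n.+1 => i].
Proof. by apply/forallP=> i; apply/forallP=> j; rewrite !ffunE; apply/implyP. Qed.

Lemma monob_comp m n p (g : Op n p) (f : Op m n) :
  monob [ffun i => opfun g (opfun f i)].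
Proof.
apply/forallP=> i; apply/forallP=> j; rewrite !ffunE; apply/implyP=> hij.
case: g f => g hg [f hf]; rewrite /opfun /=.
have hfij : f i <= f j by move/forallP: hf => /(_ i) /forallP /(_ j) /implyP; apply.
by move/forallP: hg => /(_ (f i)) /forallP /(_ (f j)) /implyP; apply.
Qed.

Definition idOp n : Op n n := exist (fun f => monob f) _ (monob_id n).
Definition compOp m n p (g : Op n p) (f : Op m n) : Op m p :=
  exist (fun f => monob f) _ (monob_comp g f).

Lemma opP m n (f g : Op m n) : (forall i, opfun f i = opfun g i) -> f = g.
Proof. by move=> h; apply: val_inj; apply/ffunP=> i; exact: h. Qed.

Lemma compOp1 m n (f : Op m n) : compOp f (idOp m) = f.
Proof. by apply: opP=> i; unfold opfun; simpl; rewrite ffunE; unfold opfun; simpl; rewrite ffunE. Qed.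

Lemma compOpA m n p r (h : Op p r) (g : Op n p) (f : Op m n) :
  compOp h (compOp g f) = compOp (compOp h g) f.
Proof. by apply: opP=> i; unfold opfun; simpl; rewrite !ffunE; unfold opfun; simpl; rewrite !ffunE. Qed.

Definition op_surj m n (f : Op m n) : Prop := forall j : 'I_n.+1, exists i, opfun f i = j.

Lemma monob_const n (i : 'I_n.+1) : monob [ffun _ : 'I_1 => i].
Proof. by apply/forallP=> a; apply/forallP=> b; rewrite !ffunE leqnn implybT. Qed.
Definition vtx n (i : 'I_n.+1) : Op 0 n := exist (fun f => monob f) _ (monob_const i).

Record sSet := SSet {
  ssimp :> nat -> Type;
  sact : forall m n, Op m n -> ssimp n -> ssimp m;
  sact_id : forall n (x : ssimp n), sact (idOp n) x = x;
  sact_comp : forall m n p (f : Op m n) (g : Op n p) (x : ssimp p),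
      sact (compOp g f) x = sact f (sact g x)
}.
Arguments sact {s m n}.

Record sMap (X Y : sSet) := SMap {
  smap :> forall n, X n -> Y n;
  smap_nat : forall m n (f : Op m n) (x : X n), smap (sact f x) = sact f (smap x)
}.

Definition dsurj (X Y : sSet) (f : sMap X Y) : Prop :=
  forall n (y : Y n), exists x : X n, f n x = y.

Definition is_iso (X Y : sSet) (f : sMap X Y) : Prop :=
  exists g : sMap Y X, (forall n (x : X n), g n (f n x) = x) /\
                       (forall n (y : Y n), f n (g n y) = y).

Definition degenerate (X : sSet) n (x : X n) : Prop :=
  exists m (s : Op n m) (y : X m), m < n /\ op_surj s /\ x = sact s y.
Definition nondeg (X : sSet) n (x : X n) : Prop := ~ degenerate x.

Definition repr_k (X : sSet) n (x : X n) k : Op k n -> X k := fun f => sact f x.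

Definition nonsingular (X : sSet) : Prop :=
  forall n (x : X n), nondeg x -> forall k, injective (@repr_k X n x k).

Definition Delta (n : nat) : sSet :=
  @SSet (fun k => Op k n) (fun k l (f : Op k l) (g : Op l n) => compOp g f)
        (fun k g => compOp1 g) (fun a b c f g h => compOpA h g f).

Definition repr_map (X : sSet) n (x : X n) : sMap (Delta n) X :=
  @SMap (Delta n) X (fun k g => sact g x)
        (fun a b f g => sact_comp f g x).

Definition op_map n m (r : Op n m) : sMap (Delta n) (Delta m) :=
  @SMap (Delta n) (Delta m) (fun k g => compOp r g)
        (fun a b f g => compOpA r g f).

Definition esim (X : sSet) n (x : X n) (i j : 'I_n.+1) : Prop :=
  sact (vtx i) x = sact (vtx j) x.
Definition eapprox (X : sSet) n (x : X n) (i k : 'I_n.+1) : Prop :=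
  exists j : 'I_n.+1, i <= k <= j /\ esim x i j.
Definition esimeq (X : sSet) n (x : X n) : relation 'I_n.+1 :=
  clos_refl_sym_trans _ (eapprox x).
(* rho : [n] -> [m] is the enforcer of x: the order-preserving surjection *)
(* onto [m] whose fibres are exactly the classes of esimeq x, i.e. the    *)
(* quotient map onto the ordered quotient {0..n}/~= identified with [m]. *)
Definition is_enforcer (X : sSet) n (x : X n) m (rho : Op n m) : Prop :=
  op_surj rho /\ forall i j, opfun rho i = opfun rho j <-> esimeq x i j.

Definition compat_rel (X : sSet) (R : forall n, X n -> X n -> Prop) : Prop :=
  (forall n, equivalence (X n) (R n)) /\
  (forall m n (f : Op m n) x y, R n x y -> R m (sact f x) (sact f y)).

Definition CRel (X : sSet) := {R : forall n, X n -> X n -> Prop | compat_rel R}.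

Section Quot.
Variables (X : sSet) (R : CRel X).
Let Rr := sval R.

Definition qcls n := {P : X n -> Prop | exists x, P = Rr x}.

Lemma Rr_equiv n : equivalence (X n) (@Rr n).
Proof. by case: (svalP R). Qed.
Lemma Rr_compat m n (f : Op m n) x y : Rr x y -> Rr (sact f x) (sact f y).
Proof. by case: (svalP R) => _; apply. Qed.

Lemma qact_cls m n (f : Op m n) x0 :
  (fun z : X m => exists x, Rr x0 x /\ Rr (sact f x) z) = Rr (sact f x0).
Proof.
have [_ Ts Ss] := Rr_equiv m; have [Rf Tn Sn] := Rr_equiv n.
apply: functional_extensionality=> z; apply: propositional_extensionality; split.
- case=> x [h1 h2]; apply: (Ts _ (sact f x)) => //; exact: Rr_compat.
- by move=> h; exists x0; split=> //; apply: Rf.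
Qed.

Lemma qact_ok m n (f : Op m n) (P : qcls n) :
  exists x, (fun z => exists x, sval P x /\ Rr (sact f x) z) = Rr x.
Proof. case: P => P [x0 e] /=; subst P; exists (sact f x0); exact: qact_cls. Qed.

Definition qact m n (f : Op m n) (P : qcls n) : qcls m :=
  exist _ _ (qact_ok f P).

Lemma qclsP n (P Q : qcls n) : sval P = sval Q -> P = Q.
Proof. by case: P Q => P hP [Q hQ] /= e; subst; rewrite (proof_irrelevance _ hP hQ). Qed.

Lemma qact_id n (P : qcls n) : qact (idOp n) P = P.
Proof. by apply: qclsP; case: P => P [x0 e] /=; subst P; rewrite qact_cls sact_id. Qed.

Lemma qact_comp m n p (f : Op m n) (g : Op n p) (P : qcls p) :
  qact (compOp g f) P = qact f (qact g P).
Proof.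
apply: qclsP; case: P => P [x0 e] /=; subst P.
rewrite (qact_cls (compOp g f)) sact_comp.
have E : forall x, (exists x1, Rr x0 x1 /\ Rr (sact g x1) x) = Rr (sact g x0) x.
  by move=> x; rewrite -(qact_cls g x0).
apply: functional_extensionality=> z.
rewrite -(qact_cls f (sact g x0)); apply: propositional_extensionality.
by split; case=> x [h1 h2]; exists x; split=> //; move: h1; rewrite E.
Qed.

Definition quot : sSet := @SSet qcls qact qact_id qact_comp.

Definition qproj_fun n (x : X n) : quot n := exist _ (Rr x) (ex_intro _ x erefl).

Lemma qproj_nat m n (f : Op m n) (x : X n) :
  qproj_fun (sact f x) = sact f (qproj_fun x).
Proof. by apply: qclsP; rewrite /= qact_cls. Qed.

Definition qproj : sMap X quot := SMap qproj_nat.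
End Quot.

(* Desingularization DX: image of X -> prod_R X/R over all quotients    *)
(* X/R that are non-singular; eta_X the corestriction.                  *)
Section Desing.
Variable X : sSet.

Definition NSidx := {R : CRel X | nonsingular (quot R)}.
Definition prodX n := forall i : NSidx, quot (sval i) n.
Definition eta0 n (x : X n) : prodX n := fun i => qproj (sval i) n x.
Definition DXs n := {y : prodX n | exists x : X n, y = eta0 x}.

Definition pact m n (f : Op m n) (y : prodX n) : prodX m := fun i => sact f (y i).

Lemma pact_eta0 m n (f : Op m n) x : pact f (eta0 x) = eta0 (sact f x).
Proof.
by apply: functional_extensionality_dep=> i; rewrite /pact /eta0 smap_nat.
Qed.

Lemma dact_ok m n (f : Op m n) (y : DXs n) : exists x, pact f (sval y) = eta0 x.
Proof. case: y => y [x e] /=; subst y; exists (sact f x); exact: pact_eta0. Qed.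

Definition dact m n (f : Op m n) (y : DXs n) : DXs m := exist _ _ (dact_ok f y).

Lemma DXsP n (y z : DXs n) : sval y = sval z -> y = z.
Proof. by case: y z => y hy [z hz] /= e; subst; rewrite (proof_irrelevance _ hy hz). Qed.

Lemma dact_id n (y : DXs n) : dact (idOp n) y = y.
Proof.
apply: DXsP; apply: functional_extensionality_dep=> i /=.
by rewrite /pact sact_id.
Qed.

Lemma dact_comp m n p (f : Op m n) (g : Op n p) (y : DXs p) :
  dact (compOp g f) y = dact f (dact g y).
Proof.
apply: DXsP; apply: functional_extensionality_dep=> i /=.
by rewrite /pact sact_comp.
Qed.

Definition DX : sSet := @SSet DXs dact dact_id dact_comp.

Definition eta_fun n (x : X n) : DX n := exist _ (eta0 x) (ex_intro _ x erefl).

Lemma eta_nat m n (f : Op m n) (x : X n) : eta_fun (sact f x) = sact f (eta_fun x).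
Proof. by apply: DXsP; rewrite /= pact_eta0. Qed.

Definition eta : sMap X DX := SMap eta_nat.
End Desing.

(* Pushouts of  coprod_s Delta[m_s] <- coprod_s Delta[n_s] -> X ,        *)
(* stated by the universal property; a map out of a coproduct is a       *)
(* family of maps out of the summands.                                   *)
Definition is_pushout (X : sSet) (I : Type) (nI mI : I -> nat)
  (rho : forall s, Op (nI s) (mI s)) (sb : forall s, sMap (Delta (nI s)) X)
  (Y : sSet) (q : sMap X Y) (j : forall s, sMap (Delta (mI s)) Y) : Prop :=
  (forall s k (t : Op k (nI s)), j s k (op_map (rho s) k t) = q k (sb s k t)) /\
  (forall (Z : sSet) (g : sMap X Z) (h : forall s, sMap (Delta (mI s)) Z),
     (forall s k (t : Op k (nI s)), h s k (op_map (rho s) k t) = g k (sb s k t)) ->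
     exists u : sMap Y Z,
       ((forall n (x : X n), u n (q n x) = g n x) /\
        (forall s k (t : Op k (mI s)), u k (j s k t) = h s k t)) /\
       (forall u' : sMap Y Z,
          (forall n (x : X n), u' n (q n x) = g n x) ->
          (forall s k (t : Op k (mI s)), u' k (j s k t) = h s k t) ->
          forall n (y : Y n), u' n y = u n y)).

Definition sidx (X : sSet) (S : forall n, X n -> Prop) := {n : nat & {x : X n | S n x}}.
Definition sdeg (X : sSet) (S : forall n, X n -> Prop) (s : sidx S) : nat := projT1 s.
Definition ssx (X : sSet) (S : forall n, X n -> Prop) (s : sidx S) : X (sdeg s) :=
  sval (projT2 s).

(* Main.v *)
Require Import Defs.
From Stdlib Require Import Relations FunctionalExtensionality PropExtensionality ProofIrrelevance ClassicalEpsilon Classical.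
From mathcomp Require Import all_boot.
Set Implicit Arguments. Unset Strict Implicit. Unset Printing Implicit Defensive.

Lemma sigP' (A : Type) (P : A -> Prop) (a b : {x | P x}) : sval a = sval b -> a = b.
Proof. by case: a b => a ha [b hb] /= e; subst; rewrite (proof_irrelevance _ ha hb). Qed.

Lemma opfunC m n p (g : Op n p) (f : Op m n) i : opfun (compOp g f) i = opfun g (opfun f i).
Proof. by rewrite /opfun /= ffunE. Qed.

Lemma opfun_mono m n (f : Op m n) (i j : 'I_m.+1) : i <= j -> opfun f i <= opfun f j.
Proof. by case: f => f hf; rewrite /opfun /= => hij; move/forallP: hf => /(_ i) /forallP /(_ j) /implyP; apply. Qed.

Lemma opfun_vtx n (i : 'I_n.+1) k : opfun (vtx i) k = i.
Proof. by rewrite /opfun /= ffunE. Qed.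

Lemma comp_vtx n p (g : Op n p) (i : 'I_n.+1) : compOp g (vtx i) = vtx (opfun g i).
Proof. by apply: opP => k; rewrite opfunC !opfun_vtx. Qed.

Lemma section_ex n m (r : Op n m) : op_surj r ->
  exists s : Op m n, forall j, opfun r (opfun s j) = j.
Proof.
move=> hs.
pose P (j : 'I_m.+1) : pred nat := fun i => (i < n.+1) && (opfun r (inord i) == j).
have hex : forall j, exists i, P j i.
  move=> j; case: (hs j) => i hi; exists (val i); rewrite /P ltn_ord /=.
  by rewrite inord_val hi.
pose sg j : 'I_n.+1 := inord (ex_minn (hex j)).
have sgP : forall j, opfun r (sg j) = j.
  by move=> j; rewrite /sg; case: ex_minnP => a /andP [_ /eqP ->].
have mono : monob [ffun j => sg j].
  apply/forallP=> j1; apply/forallP=> j2; rewrite !ffunE; apply/implyP=> h12.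
  rewrite /sg; case: ex_minnP => a1 /andP [a1n ha1] min1.
  case: ex_minnP => a2 /andP [a2n ha2] min2.
  rewrite !inordK //; case: leqP => // lt21.
  have : opfun r (inord a2) <= opfun r (inord a1).
    by apply: opfun_mono; rewrite !inordK // ltnW.
  rewrite (eqP ha1) (eqP ha2) => h21.
  have e : j1 = j2 by apply: val_inj; apply/eqP; rewrite eqn_leq h12 h21.
  subst j2.
  have := min1 a2; rewrite /P a2n ha2 => /(_ isT); rewrite leqNgt lt21 //.
exists (exist (fun f => monob f) _ mono) => j; rewrite /opfun /= ffunE; exact: sgP.
Qed.

Lemma EZ (Z : sSet) : forall N n, n <= N -> forall z : Z n,
  exists m (t : Op n m) (w : Z m), op_surj t /\ nondeg w /\ z = sact t w.
Proof.
elim=> [|N IH] n hn z.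
- case: (classic (degenerate z)) => [[m [s [y [hm _]]]]|hnd].
    by move: hm; rewrite ltnNge (leq_trans hn).
  exists n, (idOp n), z; split; [|split=> //; by rewrite sact_id].
  by move=> i; exists i; rewrite /opfun /= ffunE.
- case: (classic (degenerate z)) => [[m [s [y [hm [hs ->]]]]]|hnd].
    have [m' [t [w [ht [hw ->]]]]] := IH m (leq_trans (leq_trans hm hn) (leqnn _)) y.
    exists m', (compOp t s), w; split; last by split=> //; rewrite sact_comp.
    move=> i; case: (ht i) => a <-; case: (hs a) => b <-; exists b; exact: opfunC.
  exists n, (idOp n), z; split; [|split=> //; by rewrite sact_id].
  by move=> i; exists i; rewrite /opfun /= ffunE.
Qed.

Lemma vtx_inj (Z : sSet) (HZ : nonsingular Z) n (w : Z n) (u v : 'I_n.+1) :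
  nondeg w -> sact (vtx u) w = sact (vtx v) w -> u = v.
Proof.
move=> hw e; have := HZ _ _ hw 0 (vtx u) (vtx v) e => e2.
by rewrite -(opfun_vtx u ord0) e2 opfun_vtx.
Qed.

Lemma factor (X Z : sSet) (HZ : nonsingular Z) (pi : sMap X Z) n (x : X n)
  mm (r : Op n mm) (Hr : is_enforcer x r) k (a b : Op k n) :
  (forall l, opfun r (opfun a l) = opfun r (opfun b l)) ->
  sact a (pi n x) = sact b (pi n x).
Proof.
move=> hab.
have [m' [t [w [ht [hw e]]]]] := EZ (leqnn n) (pi n x).
have esimP : forall i i', esim x i i' -> opfun t i = opfun t i'.
  move=> i i' h; apply: (vtx_inj HZ hw).
  rewrite -!comp_vtx !sact_comp -e -!smap_nat; rewrite /esim in h; by rewrite h.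
have eqP' : forall i i', esimeq x i i' -> opfun t i = opfun t i'.
  move=> i i' h; induction h as [i i' h| i | i i' h IH | i i' i'' h1 IH1 h2 IH2].
  - case: h => jj [/andP [h1 h2] hs]; have := esimP _ _ hs => ej.
    apply: val_inj; apply/eqP; rewrite eqn_leq (opfun_mono t h1) /=.
    by rewrite ej (opfun_mono t h2).
  - by [].
  - by rewrite IH.
  - by rewrite IH1 IH2.
have et : compOp t a = compOp t b.
  apply: opP => l; rewrite !opfunC; apply: eqP'; exact: (proj1 (proj2 Hr _ _) (hab l)).
by rewrite e -!sact_comp et.
Qed.

Section Img.
Variables (X Y : sSet) (q : sMap X Y).
Definition imT n := {y : Y n | exists x, q n x = y}.
Lemma im_ok m n (f : Op m n) (y : imT n) : exists x, q m x = sact f (sval y).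
Proof. case: y => y [x e] /=; exists (sact f x); rewrite -e; exact: smap_nat. Qed.
Definition imact m n (f : Op m n) (y : imT n) : imT m := exist _ _ (im_ok f y).
Lemma imact_id n (y : imT n) : imact (idOp n) y = y.
Proof. by apply: sigP'; rewrite /= sact_id. Qed.
Lemma imact_comp m n p (f : Op m n) (g : Op n p) (y : imT p) :
  imact (compOp g f) y = imact f (imact g y).
Proof. by apply: sigP'; rewrite /= sact_comp. Qed.
Definition Im : sSet := @SSet imT imact imact_id imact_comp.
Definition incl : sMap Im Y := @SMap Im Y (fun n y => sval y) (fun _ _ _ _ => erefl).
Definition qIm_fun n (x : X n) : Im n := exist _ (q n x) (ex_intro _ x erefl).
Lemma qIm_nat m n (f : Op m n) (x : X n) : qIm_fun (sact f x) = sact f (qIm_fun x).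
Proof. by apply: sigP'; rewrite /= smap_nat. Qed.
Definition qIm : sMap X Im := @SMap X Im qIm_fun qIm_nat.
End Img.

Definition compM (A B C : sSet) (f : sMap A B) (g : sMap B C) : sMap A C :=
  @SMap A C (fun n x => g n (f n x))
    (fun m n h x => etrans (f_equal (g m) (smap_nat f h x)) (smap_nat g h (f n x))).
Definition idM (A : sSet) : sMap A A := @SMap A A (fun n x => x) (fun _ _ _ _ => erefl).

Theorem mainTheorem6
  (X : sSet) (S : forall n, X n -> Prop)
  (HS : forall n (x : X n), S n x -> nondeg x)
  (m : sidx S -> nat) (rho : forall s : sidx S, Op (sdeg s) (m s))
  (Hrho : forall s : sidx S, is_enforcer (ssx s) (rho s))
  (Y : sSet) (q : sMap X Y) (j : forall s : sidx S, sMap (Delta (m s)) Y)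
  (Hpo : is_pushout rho (fun s => repr_map (ssx s)) q j) :
  dsurj q /\
  exists p : sMap Y (DX X),
    (forall n (x : X n), p n (q n x) = eta X n x) /\
    (forall p' : sMap Y (DX X), (forall n (x : X n), p' n (q n x) = eta X n x) ->
       forall n (y : Y n), p' n y = p n y) /\
    dsurj p /\
    (nonsingular Y -> is_iso p).
Proof.
case: Hpo => H1 H2.
have sec : forall s, {sg : Op (m s) (sdeg s) | forall jj, opfun (rho s) (opfun sg jj) = jj}.
  move=> s; apply: constructive_indefinite_description; exact: section_ex (proj1 (Hrho s)).
pose sg s := sval (sec s).
have sgP : forall s k (t : Op k (m s)), compOp (rho s) (compOp (sg s) t) = t.
  by move=> s k t; apply: opP => l; rewrite !opfunC (svalP (sec s)).
have jq : forall s k (t : Op k (m s)), j s k t = q k (sact (compOp (sg s) t) (ssx s)).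
  move=> s k t; rewrite -{1}(sgP s k t); exact: (H1 s k (compOp (sg s) t)).
have qsurj : dsurj q.
  have hc : forall s k (t : Op k (sdeg s)),
     (fun s => compM (compM (op_map (sg s)) (repr_map (ssx s))) (qIm q)) s k (op_map (rho s) k t)
     = qIm q k (repr_map (ssx s) k t).
    move=> s k t; apply: sigP'; rewrite /= -jq; exact: H1.
  have [u [[hu1 hu2] _]] := H2 (Im q) (qIm q) _ hc.
    have [u0 [_ hu0]] := H2 Y q j H1.
    move=> n y; case: (svalP (u n y)) => x hx; exists x; rewrite hx.
    have e1 := hu0 (idM Y) (fun _ _ => erefl) (fun _ _ _ => erefl) n y.
    have c1 : forall n' (x : X n'), compM u (incl q) n' (q n' x) = q n' x.
      by move=> n' x'; rewrite /= hu1.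
    have c2 : forall s k (t : Op k (m s)), compM u (incl q) k (j s k t) = j s k t.
      by move=> s k t; rewrite /= hu2 /= -jq.
    have e2 := hu0 (compM u (incl q)) c1 c2 n y.
    by rewrite /= in e1 e2; rewrite e2 -e1.
split=> //.
pose h s := compM (compM (op_map (sg s)) (repr_map (ssx s))) (eta X).
have hc : forall s k (t : Op k (sdeg s)),
   h s k (op_map (rho s) k t) = eta X k (repr_map (ssx s) k t).
  move=> s k t; apply: DXsP; apply: functional_extensionality_dep => i.
  rewrite /= /eta0.
  rewrite !(smap_nat (qproj (sval i))).
  apply: (factor (svalP i) (qproj (sval i)) (Hrho s)) => l.
  by rewrite !opfunC (svalP (sec s)).
have [p [[hp1 hp2] _]] := H2 (DX X) (eta X) h hc.
exists p; split=> //; split.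
  by move=> p' hp' n y; case: (qsurj n y) => x <-; rewrite hp1 hp'.
split.
  move=> n d; case: (svalP d) => x hx; exists (q n x); rewrite hp1.
  by apply: DXsP; rewrite hx.
move=> NSY.
have Rok : compat_rel (fun n (a b : X n) => q n a = q n b).
  split.
    move=> n; split.
    - by move=> a.
    - by move=> a b c -> .
    - by move=> a b ->.
  by move=> m0 n f a b e; rewrite !smap_nat e.
pose Rq : CRel X := exist _ _ Rok.
have qeq : forall n (a b : X n), qproj Rq n a = qproj Rq n b -> q n a = q n b.
  move=> n a b e; have := f_equal (fun P => sval P b) e => /= ->; by [].
have qeq2 : forall n (a b : X n), q n a = q n b -> qproj Rq n a = qproj Rq n b.
  move=> n a b e; apply: qclsP => /=; apply: functional_extensionality => z.
  by apply: propositional_extensionality; rewrite e.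
have qrep : forall n (w : quot Rq n), exists x, w = qproj Rq n x.
  move=> n [P [x e]]; exists x; apply: qclsP; by rewrite /= e.
have NSQ : nonsingular (quot Rq).
  move=> n w hw k f g; case: (qrep n w) => x ->{w} in hw *.
  rewrite /repr_k -!smap_nat => e; have e2 := qeq _ _ _ e.
  rewrite !smap_nat in e2.
  apply: (NSY n (q n x)) => //.
  move=> [m0 [s0 [y [hm [hs ey]]]]]; apply: hw.
  case: (qsurj m0 y) => x0 ex0; exists m0, s0, (qproj Rq m0 x0); split=> //; split=> //.
  rewrite -smap_nat; apply: qeq2; by rewrite smap_nat ex0.
pose iR : NSidx X := exist _ Rq NSQ.
have etaq : forall n (a b : X n), eta0 a = eta0 b -> q n a = q n b.
  move=> n a b e; apply: qeq; exact: (f_equal (fun F => F iR) e).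
pose xof n (d : DX X n) := sval (constructive_indefinite_description _ (svalP d)).
have xofP : forall n (d : DX X n), sval d = eta0 (xof n d).
  move=> n d; exact: (svalP (constructive_indefinite_description _ (svalP d))).
have gnat : forall m0 n (f : Op m0 n) (d : DX X n),
    q m0 (xof m0 (sact f d)) = sact f (q n (xof n d)).
  move=> m0 n f d; rewrite -smap_nat; apply: etaq.
  by rewrite -xofP /= xofP pact_eta0.
exists (@SMap (DX X) Y (fun n d => q n (xof n d)) gnat); split.
  move=> n y; case: (qsurj n y) => x <-; rewrite /= hp1; apply: etaq.
  by rewrite -xofP.
move=> n d; rewrite /= hp1; apply: DXsP; by rewrite /= -xofP.
Qed.
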